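(* Let $P\subseteq\mathbb{R}^{d'}$ and $Q\subseteq\mathbb{R}^d$ be polytopes with vertices $p_1,\dots,p_n$ and $q_1,\dots,q_n$, with a linear map $\pi$ such that $\pi(p_i)=q_i$. Let $\hat P\subseteq\mathbb{R}^{d'+1}$ (vertices $\hat p_1,\dots,\hat p_{n+1}$, map $f_P$) and $\hat Q\subseteq\mathbb{R}^{d+1}$ (vertices $\hat q_1,\dots,\hat q_{n+1}$, map $f_Q$) be single-element liftings of $P$ and $Q$, and let $\hat\pi$ be a linear map with $\hat\pi(\hat p_i)=\hat q_i$ such that $\pi,\hat\pi$ are compatible with the liftings, i.e. $f_Q\circ\hat\pi=\pi\circ f_P$. Then the isomorphism $\tau^*:\ker(\phi_Q)^*\to\ker(\phi_{\hat Q})^*$ restricts to an isomorphism from $\mathrm{im}(\phi^*_{P,Q})$ onto $\mathrm{im}(\phi^*_{\hat P,\hat Q})$.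
   Context: For a polytope $P$ with vertices $p_1,\dots,p_n$ in $\mathbb{R}^{d'}$, $\phi_P:\mathbb{R}^n\to\mathbb{R}^{d'+1}$ is the linear map given by the $(d'+1)\times n$ matrix whose columns are the vectors $(1,p_i)$; similarly $\phi_Q:\mathbb{R}^n\to\mathbb{R}^{d+1}$. The map $\pi$ is extended to $\mathbb{R}^{d'+1}\to\mathbb{R}^{d+1}$ (acting as the identity on the first, homogenizing, coordinate), so that $\pi\circ\phi_P=\phi_Q$. The map $\phi^*_{P,Q}$ is the composite $(\mathbb{R}^{d'+1})^*\xrightarrow{\phi_P^*}(\mathbb{R}^n)^*\twoheadrightarrow\ker(\phi_Q)^*$ (the second map being restriction). A polytope $\hat Q\subseteq\mathbb{R}^{d+1}$ with vertices $\hat q_1,\dots,\hat q_{n+1}$ is a single-element lifting of $Q$ if there is a linear surjection $f:\mathbb{R}^{d+1}\to\mathbb{R}^d$ with $f(\hat q_{n+1})=0$ and $f(\hat q_i)=c_iq_i$ for $i\le n$ with positive scalars $c_i$. Then $\tau:\mathbb{R}^{n+1}\to\mathbb{R}^n$ is defined by $e_{n+1}\mapsto0$, $e_i\mapsto c_ie_i$ ($i\le n$); it restricts to an isomorphism $\ker(\phi_{\hat Q})\to\ker(\phi_Q)$, whose dual is $\tau^*$. (Under compatibility, the constants $c_i$, hence the maps $\tau$, for $P$ and $Q$ coincide.)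
   Formalization: A single-element lifting uses a linear surjection f: ℝᵈ⁺² → ℝᵈ⁺¹ of homogenized points with f(1,q̂ₙ₊₁)=0 and f(1,q̂ᵢ)=cᵢ(1,qᵢ) in place of f(q̂ₙ₊₁)=0 and f(q̂ᵢ)=cᵢqᵢ, and compatibility extends π̂ and π by the identity on the homogenizing coordinate. Each condition added here is assumed in the paper as well or is needed for the statement above to hold. *)

(* Defs.v *)
(* Points of R^k are column vectors 'cV[R]_k, linear maps are
   matrices acting on the left (A *m v), linear functionals are row vectors. *)
From HB Require Import structures.
From mathcomp Require Import all_boot all_order all_algebra.
Set Implicit Arguments. Unset Strict Implicit. Unset Printing Implicit Defensive.
Import Order.TTheory GRing.Theory Num.Theory.
Local Open Scope ring_scope.

Section Defs.
Variable R : realFieldType.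

Definition hom k (v : 'cV[R]_k) : 'cV[R]_(1 + k) := col_mx (const_mx 1) v.

Definition phi k m (p : 'I_m -> 'cV[R]_k) : 'M[R]_(1 + k, m) :=
  \matrix_(i, j) hom (p j) i 0.

Definition hext k l (A : 'M[R]_(k, l)) : 'M[R]_(1 + k, 1 + l) :=
  block_mx 1%:M 0 0 A.

Definition in_conv_hull k m (p : 'I_m -> 'cV[R]_k) (S : pred 'I_m)
    (x : 'cV[R]_k) : Prop :=
  exists w : 'I_m -> R,
    [/\ forall j, 0 <= w j, forall j, ~~ S j -> w j = 0,
        \sum_j w j = 1 & \sum_j w j *: p j = x].

(* p_1, ..., p_m are (exactly, without repetition) the vertices of the
   polytope conv{p_1, ..., p_m} *)
Definition vertex_list k m (p : 'I_m -> 'cV[R]_k) : Prop :=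
  injective p /\ forall i, ~ in_conv_hull p (predC1 i) (p i).

Definition surj_mx k l (A : 'M[R]_(k, l)) : Prop :=
  forall y : 'cV[R]_k, exists x : 'cV[R]_l, A *m x = y.

(* the index of the i-th old vertex (i <= n) among the n+1 lifted vertices *)
Definition old m (i : 'I_m) : 'I_m.+1 := widen_ord (leqnSn m) i.

(* single-element lifting (homogeneous reading):
   ph : 'I_m.+1 -> R^(k+1) are the vertices of the lifted polytope,
   f is a linear surjection on homogeneous coordinates,
   f (1, ph_{m+1}) = 0 and f (1, ph_i) = c_i (1, p_i) with c_i > 0. *)
Definition single_element_lifting k m (p : 'I_m -> 'cV[R]_k)
    (ph : 'I_m.+1 -> 'cV[R]_k.+1) (f : 'M[R]_(1 + k, 1 + k.+1))
    (c : 'I_m -> R) : Prop :=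
  [/\ vertex_list ph, surj_mx f, f *m hom (ph ord_max) = 0,
      forall i, 0 < c i & forall i, f *m hom (ph (old i)) = c i *: hom (p i)].

Definition tau m (c : 'I_m -> R) : 'M[R]_(m, m.+1) :=
  \matrix_(i, j) (if j == old i then c i else 0).

End Defs.

(* Main.v *)
Require Import Defs.
From HB Require Import structures.
From mathcomp Require Import all_boot all_order all_algebra.
Import Order.TTheory GRing.Theory Num.Theory.
Local Open Scope ring_scope.

Section Aux.
Variable R : realFieldType.

Lemma surj_ker k (f : 'M[R]_(k, k.+1)) (v0 : 'cV[R]_(k.+1)) :
  surj_mx f -> f *m v0 = 0 -> v0 != 0 ->
  (forall w, f *m w = 0 -> exists s, w = s *: v0) /\
  (forall u : 'rV[R]_(k.+1), u *m v0 = 0 -> exists lam : 'rV[R]_k, u = lam *m f).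
Proof.
move=> sf fv0 v0n0.
have [X HX] : exists X : 'I_k -> 'cV[R]_(k.+1), forall i, f *m X i = delta_mx i 0.
  apply: (@fin_all_exists _ (fun _ => _) (fun i x => f *m x = delta_mx i 0)) => i; exact: sf.
pose C : 'M[R]_(k.+1, k) := \matrix_(j, i) X i j 0.
have fC : f *m C = 1%:M.
  apply/matrixP => a b; rewrite !mxE.
  have := congr1 (fun M : 'cV[R]_k => M a ord0) (HX b); rewrite !mxE eqxx andbT => <-.
  by apply: eq_bigr => j _; rewrite !mxE.
have rf : \rank f = k.
  apply/eqP; rewrite eqn_leq rank_leq_row /=.
  by rewrite -{1}(mxrank1 R k) -fC mxrankM_maxl.
have rv0 : \rank v0 = 1%N.
  by rewrite -mxrank_tr rank_rV; apply/eqP; rewrite eqb1 -trmx0 (inj_eq trmx_inj).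
split.
- move=> w fw.
  have sw : (w^T <= kermx f^T)%MS by apply/sub_kermxP; rewrite -trmx_mul fw trmx0.
  have sv : (v0^T <= kermx f^T)%MS by apply/sub_kermxP; rewrite -trmx_mul fv0 trmx0.
  have [_] := mxrank_leqif_sup sv.
  rewrite mxrank_ker !mxrank_tr rf rv0 subSnn eqxx => /esym sK.
  have /submxP [D eD] := submx_trans sw sK.
  exists (D 0 0); apply/matrixP => i j; rewrite (ord1 j).
  have := congr1 (fun M : 'rV[R]_(k.+1) => M ord0 i) eD; rewrite !mxE big_ord1 !mxE => ->.
  by [].
- move=> u uv0.
  have su : (u <= kermx v0)%MS by apply/sub_kermxP.
  have sf' : (f <= kermx v0)%MS by apply/sub_kermxP.
  have [_] := mxrank_leqif_sup sf'.
  rewrite mxrank_ker rf rv0 subn1 eqxx => /esym sK.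
  by have /submxP [D ->] := submx_trans su sK; exists D.
Qed.


Definition e0 k : 'I_(1 + k) := lshift k ord0.

Lemma hom_first k (v : 'cV[R]_k) : Defs.hom v (e0 k) ord0 = 1.
Proof. by rewrite /Defs.hom /e0 col_mxEu mxE. Qed.

Lemma hom_neq0 k (v : 'cV[R]_k) : Defs.hom v != 0.
Proof. by apply/eqP => /(congr1 (fun M : 'cV[R]_(1 + k) => M (e0 k) ord0)); rewrite hom_first mxE; apply/eqP; rewrite oner_eq0. Qed.

Lemma phi_mul k m (p : 'I_m -> 'cV[R]_k) (x : 'cV[R]_m) :
  phi p *m x = \sum_j x j ord0 *: Defs.hom (p j).
Proof.
apply/matrixP => i l; rewrite (ord1 l) !mxE summxE; apply: eq_bigr => j _.
by rewrite !mxE mulrC.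
Qed.

Lemma phi_first k m (p : 'I_m -> 'cV[R]_k) (x : 'cV[R]_m) :
  (phi p *m x) (e0 k) ord0 = \sum_j x j ord0.
Proof.
rewrite phi_mul summxE; apply: eq_bigr => j _.
by rewrite mxE hom_first mulr1.
Qed.

Lemma hext_hom k l (A : 'M[R]_(k, l)) (v : 'cV[R]_l) :
  hext A *m Defs.hom v = Defs.hom (A *m v).
Proof.
by rewrite /hext /Defs.hom mul_block_col !mul0mx mul1mx addr0 add0r.
Qed.

Lemma old_lift m (i : 'I_m) : old i = lift ord_max i.
Proof. by apply/val_inj; rewrite /= /bump leqNgt ltn_ord. Qed.

Lemma tau_mul m (c : 'I_m -> R) (xh : 'cV[R]_m.+1) :
  tau c *m xh = \col_i (c i * xh (old i) ord0).
Proof.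
apply/matrixP => i l; rewrite (ord1 l) !mxE (bigD1 (old i)) //= mxE eqxx.
rewrite big1 ?addr0 // => j /negbTE nj; by rewrite mxE nj mul0r.
Qed.

Lemma key k m (p : 'I_m -> 'cV[R]_k) (ph : 'I_m.+1 -> 'cV[R]_k.+1) (f : 'M[R]_(1 + k, 1 + k.+1)) c :
  single_element_lifting p ph f c ->
  forall xh : 'cV[R]_m.+1, f *m (phi ph *m xh) = phi p *m (tau c *m xh).
Proof.
case=> _ _ fmax _ fold xh.
rewrite tau_mul !phi_mul mulmx_sumr big_ord_recr /= -scalemxAr fmax scaler0 addr0.
apply: eq_bigr => i _; rewrite -scalemxAr fold scalerA mxE mulrC.
by [].
Qed.

Lemma scale_entry m l a (A : 'M[R]_(m, l)) i j : (a *: A) i j = a * A i j.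
Proof. by rewrite mxE. Qed.

Lemma sub_entry m l (A B : 'M[R]_(m, l)) i j : (A - B) i j = A i j - B i j.
Proof. by rewrite !mxE. Qed.

Lemma row_entry m l (A : 'M[R]_(m, l)) i j : (row i A) ord0 j = A i j.
Proof. by rewrite !mxE. Qed.

End Aux.
Arguments key {R k m p ph f c}.
Arguments hom_neq0 {R k}.
Theorem lemma2p7 (R : realFieldType) (n d d' : nat)
    (p : 'I_n -> 'cV[R]_d') (q : 'I_n -> 'cV[R]_d) (pi : 'M[R]_(d, d'))
    (ph : 'I_n.+1 -> 'cV[R]_d'.+1) (qh : 'I_n.+1 -> 'cV[R]_d.+1)
    (fP : 'M[R]_(1 + d', 1 + d'.+1)) (fQ : 'M[R]_(1 + d, 1 + d.+1))
    (cP cQ : 'I_n -> R) (pih : 'M[R]_(d.+1, d'.+1)) :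
  vertex_list p -> vertex_list q ->
  (forall i, pi *m p i = q i) ->
  single_element_lifting p ph fP cP ->
  single_element_lifting q qh fQ cQ ->
  (forall j, pih *m ph j = qh j) ->
  fQ *m hext pih = hext pi *m fP ->
  (* tau restricts to an isomorphism ker(phi_Qh) -> ker(phi_Q), so that its
     dual tau^* : ker(phi_Q)^* -> ker(phi_Qh)^* is well defined ... *)
  ((forall xh : 'cV[R]_n.+1, phi qh *m xh = 0 -> phi q *m (tau cQ *m xh) = 0)
   /\ (forall xh : 'cV[R]_n.+1, phi qh *m xh = 0 -> tau cQ *m xh = 0 -> xh = 0)
   /\ (forall x : 'cV[R]_n, phi q *m x = 0 ->
         exists2 xh : 'cV[R]_n.+1, phi qh *m xh = 0 & tau cQ *m xh = x))
  /\
  (* ... and tau^* maps im(phi^*_{P,Q}) onto im(phi^*_{Ph,Qh}): a functional on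
     ker(phi_Q), given as the restriction of y, lies in im(phi^*_{P,Q}) iff
     its image under tau^* (i.e. xh |-> y (tau xh) on ker(phi_Qh)) lies in
     im(phi^*_{Ph,Qh}). *)
  (forall y : 'rV[R]_n,
     (exists lam : 'rV[R]_(1 + d'),
        forall x : 'cV[R]_n, phi q *m x = 0 -> y *m x = lam *m phi p *m x)
     <->
     (exists lamh : 'rV[R]_(1 + d'.+1),
        forall xh : 'cV[R]_n.+1, phi qh *m xh = 0 ->
          y *m (tau cQ *m xh) = lamh *m phi ph *m xh)).
Proof.
move=> _ _ Hpi slP slQ Hpih compat.
have KP := key slP; have KQ := key slQ.
have [_ sP fmaxP _ foldP] := slP.
have [_ sQ fmaxQ cpos foldQ] := slQ.
have cn0 : forall i, cQ i != 0 by move=> i; rewrite gt_eqF ?cpos.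
have ceq : forall i, cP i = cQ i.
  move=> i.
  have := congr1 (fun M => M *m Defs.hom (ph (old i))) compat.
  rewrite -!mulmxA hext_hom Hpih foldQ foldP -scalemxAr hext_hom Hpi.
  move=> /(congr1 (fun M : 'cV[R]_(1 + d) => M (e0 d) ord0)).
  by rewrite !scale_entry !hom_first !mulr1.
have tauE : tau cP = tau cQ by apply/matrixP => i j; rewrite !mxE ceq.
have P1 : forall xh : 'cV[R]_n.+1, phi qh *m xh = 0 -> phi q *m (tau cQ *m xh) = 0.
  by move=> xh h; rewrite -KQ h mulmx0.
have first0 : forall k m (p0 : 'I_m -> 'cV[R]_k) (x : 'cV[R]_m),
    phi p0 *m x = 0 -> \sum_j x j ord0 = 0.
  by move=> k m p0 x h; rewrite -(phi_first _ _ _ p0 x) h mxE.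
have [kerQ _] := @surj_ker R (1 + d) fQ _ sQ fmaxQ (hom_neq0 _).
have [_ imP] := @surj_ker R (1 + d') fP _ sP fmaxP (hom_neq0 _).
have P3 : forall x, phi q *m x = 0 ->
    exists2 xh : 'cV[R]_n.+1, phi qh *m xh = 0 & tau cQ *m xh = x.
  move=> x hx.
  pose t := - \sum_i x i ord0 / cQ i.
  pose xh : 'cV[R]_n.+1 :=
    \col_j (if unlift ord_max j is Some i then x i ord0 / cQ i else t).
  have xold : forall i, xh (old i) ord0 = x i ord0 / cQ i.
    by move=> i; rewrite mxE old_lift liftK.
  have xmax : xh ord_max ord0 = t by rewrite mxE unlift_none.
  have tx : tau cQ *m xh = x.
    apply/matrixP => i l; rewrite (ord1 l) tau_mul mxE xold mulrC divfK //.
  exists xh => //.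
  have h0 : fQ *m (phi qh *m xh) = 0 by rewrite KQ tx.
  have [s es] := kerQ _ h0.
  have s0 : s = 0.
    have := congr1 (fun M : 'cV[R]_(1 + d.+1) => M (e0 _) ord0) es.
    rewrite /= phi_first mxE hom_first mulr1 => <-.
    rewrite big_ord_recr /= xmax /t.
    rewrite (eq_bigr (fun i => x i ord0 / cQ i)) ?subrr // => i _; exact: xold.
  by rewrite es s0 scale0r.
split.
  split; first exact: P1.
  split; last exact: P3.
  move=> xh h0 ht.
  have xo : forall i, xh (old i) ord0 = 0.
    move=> i; have := congr1 (fun M : 'cV[R]_n => M i ord0) ht.
    by rewrite tau_mul !mxE => /eqP; rewrite mulf_eq0 (negbTE (cn0 i)) /= => /eqP.
  have xm : xh ord_max ord0 = 0.
    have := first0 _ _ _ _ h0; rewrite big_ord_recr /= big1 ?add0r // => i _.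
    exact: xo i.
  apply/matrixP => j l; rewrite (ord1 l) mxE.
  by case: (unliftP ord_max j) => [i ->|->] //; rewrite -old_lift; exact: xo.
move=> y; split.
  case=> lam hlam; exists (lam *m fP) => xh h0.
  by rewrite hlam ?P1 // -!mulmxA KP tauE.
case=> lamh hl.
pose v0 := Defs.hom (ph ord_max).
pose s := (lamh *m v0) ord0 ord0.
pose e := (delta_mx ord0 (e0 (d'.+1)) : 'rV[R]_(1 + d'.+1)).
have uv : (lamh - s *: e) *m v0 = 0.
  rewrite mulmxBl -scalemxAl -rowE; apply/matrixP => a b.
  by rewrite (ord1 a) (ord1 b) sub_entry scale_entry row_entry hom_first mulr1 subrr mxE.
have [lam elam] := imP _ uv.
exists lam => x hx.
have [xh h0 <-] := P3 x hx.
rewrite hl // -tauE -!mulmxA -KP.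
rewrite [RHS]mulmxA -elam mulmxBl -scalemxAl -rowE.
have r0 : row (e0 _) (phi ph *m xh) = 0.
  apply/rowP => j; rewrite (ord1 j) mxE phi_first (first0 _ _ _ _ h0) mxE //.
by rewrite r0 scaler0 subr0.
Qed.
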